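(* In the two-stage mining game, fix all parameters except $\eta$ and consider $\eta$ large enough that $A(\beta^* )=A(0)=\{1,\dots,n\}$. Then, as $\eta\to\infty$, for each active miner $i\le n$, $$h_i^*(\beta^* )=h_i^*(0)+a_iI_i+a_{-i}\bar I_{-i}+O(\bar I^2),$$ where $$a_{-i}:=\frac{h_{i,0}}{c_0^{(n)}+2\gamma H_0}\Big(1-\frac{H_0^2}{R+\gamma H_0^2}\cdot\frac{\tilde c_i+2\gamma h_{i,0}}{h_{i,0}}\Big),\qquad a_i:=\frac{H_0^2}{R+\gamma H_0^2}+a_{-i},$$ and these satisfy $a_i>0$ and $a_{-i}<0\iff h_{i,0}/H_0<1/2$. Moreover, $$\frac{h_i^*(\beta^* )}{H^*(\beta^* )}=\frac{h_{i,0}}{H_0}+\alpha_0\big((1-\alpha_i)I_i-\alpha_i\bar I_{-i}\big)+O(\bar I^2),$$ where $\alpha_0:=\frac{H_0}{R+\gamma H_0^2}>0$ and $\alpha_i:=\frac{\tilde c_i+2\gamma h_{i,0}}{c_0^{(n)}+2\gamma H_0}\in(0,1)$; and the quantity $(1-\alpha_i)I_i-\alpha_i\bar I_{-i}$ is increasing in the initial cost $\tilde c_i$ of miner $i$ (i.e., across active miners, it is larger for miners with larger initial cost). Here $O(\bar I^2)$ denotes a remainder bounded in absolute value by $C\bar I^2$ for some constant $C$ and all sufficiently large $\eta$.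
   Context: Two-stage mining game: $N\ge2$ miners with initial costs-per-hash $0<\tilde c_1\le\dots\le\tilde c_N$; newest hardware cost $\tilde c_0\le\tilde c_1$; parameters $\eta\ge0$, $R>0$, $\gamma\ge0$, $K>0$. Stage 1: miner $i$ picks $\beta_i\in[0,1]$, giving cost $c_i(\beta_i)=\tilde c_i-\beta_i(\tilde c_i-\tilde c_0)+\frac{\eta(\tilde c_i-\tilde c_0)}{2}\beta_i^2$. Stage 2: given $\beta$, miners pick $h_i\ge0$, $H=\sum_jh_j$, payoff $\frac{h_i}{H}R-c_i(\beta_i)h_i-\frac{\gamma}{2}h_i^2-K\mathbf 1_{\{i\notin A(0),\beta_i>0\}}$ if $H>0$, else $0$; $h^*(\beta)$ is the unique stage-2 pure Nash equilibrium, $H^*(\beta)=\sum_jh^*_j(\beta)$, $A(\beta)=\{i:h_i^*(\beta)>0\}$. The equilibrium investment (subgame-perfect in $\beta$) is $\beta_i^*=\min\{1/\eta,1\}$ for active miners and $0$ otherwise. Notation: $H_0=H^*(0)$, $h_{i,0}=h_i^*(0)$, $c_0^{(n)}=\sum_{i=1}^n\tilde c_i$; the cost reduction of active miner $i$ is $I_i:=c_i(0)-c_i(\beta_i^* )$, which equals $(\tilde c_i-\tilde c_0)/(2\eta)$ for $\eta>1$; $\bar I=\sum_{i=1}^nI_i$ and $\bar I_{-i}=\bar I-I_i$. *)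

(* Defs.v *)
From HB Require Import structures.
From mathcomp Require Import all_boot all_order all_algebra.
From mathcomp Require Import reals.
Set Implicit Arguments. Unset Strict Implicit. Unset Printing Implicit Defensive.
Import Order.TTheory GRing.Theory Num.Theory.
Local Open Scope ring_scope.

(* Miners are indexed by 'I_N (0-based: miner k of the paper is index k-1).
   ct i = initial cost-per-hash c~_{i+1}, ct0 = c~_0, Rw = reward R. *)

Definition cost (R : realType) (ct0 cti eta beta : R) : R :=
  cti - beta * (cti - ct0) + eta * (cti - ct0) / 2 * beta ^+ 2.

Definition totH (R : realType) (N : nat) (h : 'I_N -> R) : R :=
  \sum_(j < N) h j.

Definition upd (R : realType) (N : nat) (h : 'I_N -> R) (i : 'I_N) (x : R)
  : 'I_N -> R := fun j => if j == i then x else h j.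

(* stage-2 payoff of miner i; A0 is the set A(0) appearing in the entry cost K *)
Definition payoff (R : realType) (N : nat) (ct : 'I_N -> R) (ct0 eta Rw gamma K : R)
  (A0 : pred 'I_N) (beta : 'I_N -> R) (h : 'I_N -> R) (i : 'I_N) : R :=
  if 0 < totH h then
    h i / totH h * Rw - cost ct0 (ct i) eta (beta i) * h i - gamma / 2 * h i ^+ 2
    - (if ~~ A0 i && (0 < beta i) then K else 0)
  else 0.

Definition is_NE (R : realType) (N : nat) (ct : 'I_N -> R) (ct0 eta Rw gamma K : R)
  (A0 : pred 'I_N) (beta : 'I_N -> R) (h : 'I_N -> R) : Prop :=
  (forall i, 0 <= h i) /\
  (forall i x, 0 <= x ->
     payoff ct ct0 eta Rw gamma K A0 beta (upd h i x) i
     <= payoff ct ct0 eta Rw gamma K A0 beta h i).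

Definition beta_star (R : realType) (N : nat) (n : nat) (eta : R) : 'I_N -> R :=
  fun i => if (i < n)%N then Num.min eta^-1 1 else 0.
Arguments beta_star {R} N n eta _.

Definition Ired (R : realType) (N : nat) (ct : 'I_N -> R) (ct0 : R) (n : nat)
  (eta : R) (i : 'I_N) : R :=
  cost ct0 (ct i) eta 0 - cost ct0 (ct i) eta (beta_star N n eta i).

Definition Ibar (R : realType) (N : nat) (ct : 'I_N -> R) (ct0 : R) (n : nat)
  (eta : R) : R :=
  \sum_(j < N | (j < n)%N) Ired ct ct0 n eta j.

Definition csum (R : realType) (N : nat) (ct : 'I_N -> R) (n : nat) : R :=
  \sum_(j < N | (j < n)%N) ct j.

Definition a_minus (R : realType) (N : nat) (ct : 'I_N -> R) (Rw gamma : R)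
  (n : nat) (h0 : 'I_N -> R) (i : 'I_N) : R :=
  h0 i / (csum ct n + 2 * gamma * totH h0) *
  (1 - (totH h0) ^+ 2 / (Rw + gamma * (totH h0) ^+ 2)
       * ((ct i + 2 * gamma * h0 i) / h0 i)).

Definition a_plus (R : realType) (N : nat) (ct : 'I_N -> R) (Rw gamma : R)
  (n : nat) (h0 : 'I_N -> R) (i : 'I_N) : R :=
  (totH h0) ^+ 2 / (Rw + gamma * (totH h0) ^+ 2) + a_minus ct Rw gamma n h0 i.

Definition alpha0 (R : realType) (N : nat) (Rw gamma : R) (h0 : 'I_N -> R) : R :=
  totH h0 / (Rw + gamma * (totH h0) ^+ 2).

Definition alpha_i (R : realType) (N : nat) (ct : 'I_N -> R) (gamma : R)
  (n : nat) (h0 : 'I_N -> R) (i : 'I_N) : R :=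
  (ct i + 2 * gamma * h0 i) / (csum ct n + 2 * gamma * totH h0).

Definition Qshift (R : realType) (N : nat) (ct : 'I_N -> R) (ct0 gamma : R)
  (n : nat) (h0 : 'I_N -> R) (eta : R) (i : 'I_N) : R :=
  (1 - alpha_i ct gamma n h0 i) * Ired ct ct0 n eta i
  - alpha_i ct gamma n h0 i * (Ibar ct ct0 n eta - Ired ct ct0 n eta i).

(* Main.v *)
Require Import Defs.
From HB Require Import structures.
From mathcomp Require Import all_boot all_order all_algebra.
From mathcomp Require Import reals ring lra.
Import Order.TTheory GRing.Theory Num.Theory.
Local Open Scope ring_scope.
Set Implicit Arguments. Unset Strict Implicit. Unset Printing Implicit Defensive.
Section Core.
Variable R : realType.

Lemma bound3 (a b x A B X : R) :
  `|a| <= A -> `|b| <= B -> `|x| <= X -> `|a * b * x| <= A * B * X.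
Proof.
move=> ha hb hx; rewrite !normrM.
apply: ler_pM => //; rewrite ?mulr_ge0 //.
by apply: ler_pM.
Qed.

Lemma bound_lin (al be H1 H0 Y Y0 : R) :
  0 <= H1 -> H1 <= 2 * H0 -> 0 < Y0 -> Y0 <= Y ->
  `|(al + be * H1) / Y| <= (`|al| + `|be| * (2 * H0)) / Y0.
Proof.
move=> h1 h2 y0 yy.
have Ypos : 0 < Y by apply: lt_le_trans yy.
have hn : `|al + be * H1| <= `|al| + `|be| * (2 * H0).
  apply: le_trans (ler_normD _ _) _; rewrite lerD2l normrM (ger0_norm h1).
  by apply: ler_wpM2l.
rewrite normrM normfV (gtr0_norm Ypos).
apply: le_trans (ler_wpM2r _ hn) _; first by rewrite invr_ge0 ltW.
apply: ler_wpM2l; first by apply: le_trans hn.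
by rewrite lef_pV2 // posrE.
Qed.

Lemma idh (Rw g C0 c H0 H1 I Ib h0 h1 : R) :
  Rw + g * H0^+2 != 0 -> Rw + g * H1^+2 != 0 -> H1 != 0 -> H0 != 0 ->
  Rw - c * H0 != 0 -> C0 + 2 * g * H0 != 0 ->
  h0 = H0 * (Rw - c * H0) / (Rw + g * H0^+2) ->
  h1 = H1 * (Rw - (c - I) * H1) / (Rw + g * H1^+2) ->
  Ib = (H1 - H0) * (g * (H1 + H0) + C0) / H1 ->
  h1 - h0
  - (H0^+2 / (Rw + g * H0^+2) + h0 / (C0 + 2 * g * H0) * (1 - H0^+2 / (Rw + g * H0^+2) * ((c + 2 * g * h0) / h0))) * I
  - h0 / (C0 + 2 * g * H0) * (1 - H0^+2 / (Rw + g * H0^+2) * ((c + 2 * g * h0) / h0)) * (Ib - I) =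
  I * (H1 - H0) * ((Rw * H0 + Rw * H1) / ((Rw + g * H0^+2) * (Rw + g * H1^+2)))
  + (H1 - H0) * (H1 - H0) * ((- (Rw * (Rw * c + 2 * Rw * g * H0 - c * g * H0^+2)) + (- (Rw * (Rw * g - 2 * c * g * H0 - g^+2 * H0^+2))) * H1) / ((Rw + g * H0^+2)^+2 * (Rw + g * H1^+2)))
  + (H1 - H0) * (Ib - g * (H1 - H0)) * ((Rw * (Rw - 2 * c * H0 - g * H0^+2) / (Rw + g * H0^+2)^+2) / (C0 + 2 * g * H0)).
Proof.
move=> nQ0 nQ1 nH1 nH0 nc nD -> -> ->.
field.
by rewrite ?nQ0 ?nQ1 ?nH1 ?nH0 ?nc ?nD.
Qed.

Lemma ids (Rw g C0 c H0 H1 I Ib h0 h1 : R) :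
  Rw + g * H0^+2 != 0 -> Rw + g * H1^+2 != 0 -> H1 != 0 -> H0 != 0 ->
  Rw - c * H0 != 0 -> C0 + 2 * g * H0 != 0 ->
  h0 = H0 * (Rw - c * H0) / (Rw + g * H0^+2) ->
  h1 = H1 * (Rw - (c - I) * H1) / (Rw + g * H1^+2) ->
  Ib = (H1 - H0) * (g * (H1 + H0) + C0) / H1 ->
  h1 / H1 - h0 / H0 - H0 / (Rw + g * H0^+2) *
    ((1 - (c + 2 * g * h0) / (C0 + 2 * g * H0)) * I
     - (c + 2 * g * h0) / (C0 + 2 * g * H0) * (Ib - I)) =
  I * (H1 - H0) * ((Rw + (- (g * H0)) * H1) / ((Rw + g * H0^+2) * (Rw + g * H1^+2)))
  + (H1 - H0) * (H1 - H0) * (((- (Rw^+2 * g)) + 2 * c * Rw * g * H0 + Rw * g^+2 * H0^+2 + (c * Rw * g + 2 * Rw * g^+2 * H0 - c * g^+2 * H0^+2) * H1) / ((Rw + g * H0^+2)^+2 * (Rw + g * H1^+2)))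
  + (H1 - H0) * (Ib - g * (H1 - H0)) * (((- (2 * Rw * g * H0) - c * Rw + c * g * H0^+2) / (Rw + g * H0^+2)^+2) / (C0 + 2 * g * H0)).
Proof.
move=> nQ0 nQ1 nH1 nH0 nc nD -> -> ->.
field.
by rewrite ?nQ0 ?nQ1 ?nH1 ?nH0 ?nc ?nD.
Qed.

Lemma H1facts (Rw g C0 H0 H1 I Ib : R) :
  0 < Rw -> 0 <= g -> 0 < C0 -> 0 < H0 -> 0 < H1 -> 0 <= I -> I <= Ib -> Ib <= C0 / 2 ->
  (H1 - H0) * (g * (H1 + H0) + C0) = Ib * H1 ->
  [/\ 0 <= H1 - H0, H1 <= 2 * H0, H1 - H0 <= 2 * H0 / C0 * Ib,
      `|Ib - g * (H1 - H0)| <= (1 + g * (2 * H0 / C0)) * Ib &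
      Ib = (H1 - H0) * (g * (H1 + H0) + C0) / H1].
Proof.
move=> Rp gp Cp H0p H1p Ip IIb IbC eq.
have Ibp : 0 <= Ib by apply: le_trans IIb.
set den := g * (H1 + H0) + C0 in eq *.
have dC : C0 <= den by rewrite /den lerDr mulr_ge0 // addr_ge0 // ltW.
clearbody den.
have denp : 0 < den by apply: lt_le_trans dC.
have dge : 0 <= H1 - H0.
  have : 0 <= (H1 - H0) * den by rewrite eq mulr_ge0 // ltW.
  by rewrite pmulr_lge0.
have h1le : H1 <= 2 * H0.
  have t1 : 0 <= (den / 2 - Ib) * H1.
    by rewrite mulr_ge0 ?(ltW H1p) // subr_ge0; apply: le_trans IbC _; lra.
  have t2 : (H1 / 2 - H0) * den <= 0.
    have e2 : (H1 / 2 - H0) * den = (H1 - H0) * den - (den / 2) * H1 by field.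
    rewrite e2 eq; lra.
  have : H1 / 2 - H0 <= 0.
    by move: t2; rewrite pmulr_lle0.
  lra.
have dle : H1 - H0 <= 2 * H0 / C0 * Ib.
  rewrite mulrAC ler_pdivlMr //.
  have : (H1 - H0) * C0 <= (H1 - H0) * den by apply: ler_wpM2l.
  have : Ib * H1 <= Ib * (2 * H0) by apply: ler_wpM2l.
  lra.
split => //.
- rewrite ler_norml.
  have : g * (H1 - H0) <= g * (2 * H0 / C0 * Ib) by apply: ler_wpM2l.
  have : 0 <= g * (H1 - H0) by apply: mulr_ge0.
  move=> *; apply/andP; split; lra.
- by rewrite eq mulfK // gt_eqF.
Qed.

Lemma core_h (Rw g C0 c H0 h0 : R) :
  0 < Rw -> 0 <= g -> 0 < C0 -> 0 < H0 -> 0 < h0 ->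
  h0 * (Rw + g * H0^+2) = H0 * (Rw - c * H0) ->
  exists K, forall H1 h1 I Ib, 0 < H1 -> 0 <= I -> I <= Ib -> Ib <= C0 / 2 ->
   (H1 - H0) * (g * (H1 + H0) + C0) = Ib * H1 ->
   h1 * (Rw + g * H1^+2) = H1 * (Rw - (c - I) * H1) ->
  `|h1 - h0
  - (H0^+2 / (Rw + g * H0^+2) + h0 / (C0 + 2 * g * H0) * (1 - H0^+2 / (Rw + g * H0^+2) * ((c + 2 * g * h0) / h0))) * I
  - h0 / (C0 + 2 * g * H0) * (1 - H0^+2 / (Rw + g * H0^+2) * ((c + 2 * g * h0) / h0)) * (Ib - I)| <= K * Ib^+2.
Proof.
move=> Rp gp Cp H0p h0p eq0.
have Q0p : 0 < Rw + g * H0^+2 by rewrite ltr_pwDl // mulr_ge0 // sqr_ge0.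
have Dp : 0 < C0 + 2 * g * H0 by rewrite ltr_wpDr // !mulr_ge0 // ltW.
have nc : Rw - c * H0 != 0.
  apply/eqP => e; move: eq0; rewrite e mulr0 => /eqP; rewrite mulf_eq0.
  by rewrite !gt_eqF.
pose k := 2 * H0 / C0.
pose X1 := (`|Rw * H0| + `|Rw| * (2 * H0)) / ((Rw + g * H0^+2) * Rw).
pose X2 := (`|- (Rw * (Rw * c + 2 * Rw * g * H0 - c * g * H0^+2))| + `|- (Rw * (Rw * g - 2 * c * g * H0 - g^+2 * H0^+2))| * (2 * H0)) / ((Rw + g * H0^+2)^+2 * Rw).
pose X3 := `|(Rw * (Rw - 2 * c * H0 - g * H0^+2) / (Rw + g * H0^+2)^+2) / (C0 + 2 * g * H0)|.
exists (k * X1 + k * k * X2 + k * (1 + g * k) * X3).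
move=> H1 h1 I Ib H1p Ip IIb IbC eq1 eqh1.
have [dge h1le dle bIb eIb] := H1facts Rp gp Cp H0p H1p Ip IIb IbC eq1.
have Q1p : Rw <= Rw + g * H1^+2 by rewrite lerDl mulr_ge0 // sqr_ge0.
have Q1p' : 0 < Rw + g * H1^+2 by apply: lt_le_trans Q1p.
rewrite (idh (lt0r_neq0 Q0p) (lt0r_neq0 Q1p') (lt0r_neq0 H1p) (lt0r_neq0 H0p) nc (lt0r_neq0 Dp)) //; last 2 first.
- by rewrite -eq0 mulfK // gt_eqF.
- by rewrite -eqh1 mulfK // gt_eqF.
have Ibp : 0 <= Ib by apply: le_trans IIb.
have aI : `|I| <= Ib by rewrite ger0_norm.
have ad : `|H1 - H0| <= k * Ib by rewrite ger0_norm.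
have b1 := bound3 aI ad (bound_lin (Rw * H0) Rw (ltW H1p) h1le (mulr_gt0 Q0p Rp) (ler_wpM2l (ltW Q0p) Q1p)).
have b2 := bound3 ad ad (bound_lin (- (Rw * (Rw * c + 2 * Rw * g * H0 - c * g * H0^+2))) (- (Rw * (Rw * g - 2 * c * g * H0 - g^+2 * H0^+2))) (ltW H1p) h1le (mulr_gt0 (exprn_gt0 2 Q0p) Rp) (ler_wpM2l (ltW (exprn_gt0 2 Q0p)) Q1p)).
have b3 := bound3 ad bIb (lexx X3).
apply: le_trans (ler_normD _ _) _.
apply: le_trans (lerD (ler_normD _ _) (lexx _)) _.
rewrite -/X1 -/X2 in b1 b2.
have -> : (k * X1 + k * k * X2 + k * (1 + g * k) * X3) * Ib ^+ 2 =
  Ib * (k * Ib) * X1 + k * Ib * (k * Ib) * X2 + k * Ib * ((1 + g * (2 * H0 / C0)) * Ib) * X3.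
  by rewrite /k; ring.
by apply: lerD; first apply: lerD.
Qed.

End Core.
Section CoreS.
Variable R : realType.
Lemma core_s (Rw g C0 c H0 h0 : R) :
  0 < Rw -> 0 <= g -> 0 < C0 -> 0 < H0 -> 0 < h0 ->
  h0 * (Rw + g * H0^+2) = H0 * (Rw - c * H0) ->
  exists K, forall H1 h1 I Ib, 0 < H1 -> 0 <= I -> I <= Ib -> Ib <= C0 / 2 ->
   (H1 - H0) * (g * (H1 + H0) + C0) = Ib * H1 ->
   h1 * (Rw + g * H1^+2) = H1 * (Rw - (c - I) * H1) ->
  `|h1 / H1 - h0 / H0 - H0 / (Rw + g * H0^+2) *
    ((1 - (c + 2 * g * h0) / (C0 + 2 * g * H0)) * I
     - (c + 2 * g * h0) / (C0 + 2 * g * H0) * (Ib - I))| <= K * Ib^+2.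
Proof.
move=> Rp gp Cp H0p h0p eq0.
have Q0p : 0 < Rw + g * H0^+2 by rewrite ltr_pwDl // mulr_ge0 // sqr_ge0.
have Dp : 0 < C0 + 2 * g * H0 by rewrite ltr_wpDr // !mulr_ge0 // ltW.
have nc : Rw - c * H0 != 0.
  apply/eqP => e; move: eq0; rewrite e mulr0 => /eqP; rewrite mulf_eq0.
  by rewrite !gt_eqF.
pose k := 2 * H0 / C0.
pose X1 := (`|Rw| + `|- (g * H0)| * (2 * H0)) / ((Rw + g * H0^+2) * Rw).
pose X2 := (`|(- (Rw^+2 * g)) + 2 * c * Rw * g * H0 + Rw * g^+2 * H0^+2| + `|c * Rw * g + 2 * Rw * g^+2 * H0 - c * g^+2 * H0^+2| * (2 * H0)) / ((Rw + g * H0^+2)^+2 * Rw).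
pose X3 := `|((- (2 * Rw * g * H0) - c * Rw + c * g * H0^+2) / (Rw + g * H0^+2)^+2) / (C0 + 2 * g * H0)|.
exists (k * X1 + k * k * X2 + k * (1 + g * k) * X3).
move=> H1 h1 I Ib H1p Ip IIb IbC eq1 eqh1.
have [dge h1le dle bIb eIb] := H1facts Rp gp Cp H0p H1p Ip IIb IbC eq1.
have Q1p : Rw <= Rw + g * H1^+2 by rewrite lerDl mulr_ge0 // sqr_ge0.
have Q1p' : 0 < Rw + g * H1^+2 by apply: lt_le_trans Q1p.
rewrite (ids (lt0r_neq0 Q0p) (lt0r_neq0 Q1p') (lt0r_neq0 H1p) (lt0r_neq0 H0p) nc (lt0r_neq0 Dp)) //; last 2 first.
- by rewrite -eq0 mulfK // gt_eqF.
- by rewrite -eqh1 mulfK // gt_eqF.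
have Ibp : 0 <= Ib by apply: le_trans IIb.
have aI : `|I| <= Ib by rewrite ger0_norm.
have ad : `|H1 - H0| <= k * Ib by rewrite ger0_norm.
have b1 := bound3 aI ad (bound_lin Rw (- (g * H0)) (ltW H1p) h1le (mulr_gt0 Q0p Rp) (ler_wpM2l (ltW Q0p) Q1p)).
have b2 := bound3 ad ad (bound_lin ((- (Rw^+2 * g)) + 2 * c * Rw * g * H0 + Rw * g^+2 * H0^+2) (c * Rw * g + 2 * Rw * g^+2 * H0 - c * g^+2 * H0^+2) (ltW H1p) h1le (mulr_gt0 (exprn_gt0 2 Q0p) Rp) (ler_wpM2l (ltW (exprn_gt0 2 Q0p)) Q1p)).
have b3 := bound3 ad bIb (lexx X3).
apply: le_trans (ler_normD _ _) _.
apply: le_trans (lerD (ler_normD _ _) (lexx _)) _.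
rewrite -/X1 -/X2 in b1 b2.
have -> : (k * X1 + k * k * X2 + k * (1 + g * k) * X3) * Ib ^+ 2 =
  Ib * (k * Ib) * X1 + k * Ib * (k * Ib) * X2 + k * Ib * ((1 + g * (2 * H0 / C0)) * Ib) * X3.
  by rewrite /k; ring.
by apply: lerD; first apply: lerD.
Qed.
End CoreS.
Section Game.
Variable R : realType.

Lemma le0_small (E K b : R) : 0 < b ->
  (forall t, 0 < t -> t <= b -> E <= t * K) -> E <= 0.
Proof.
move=> bp H; rewrite leNgt; apply/negP => Ep.
pose k := `|K| + 1.
have kp : 0 < k by rewrite /k ltr_pwDr // normr_ge0.
pose t := Num.min b (E / (2 * k)).
have tp : 0 < t by rewrite lt_min bp divr_gt0 // mulr_gt0.
have tb : t <= b by rewrite ge_min lexx.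
have tE : t <= E / (2 * k) by rewrite ge_min lexx orbT.
have h1 := H t tp tb.
have h2 : t * K <= t * k.
  apply: ler_wpM2l; first exact: ltW.
  by rewrite /k; apply: le_trans (ler_norm K) _; lra.
have h3 : t * k <= E / 2.
  move: tE; rewrite ler_pdivlMr ?mulr_gt0 // => tE.
  rewrite ler_pdivlMr //; lra.
lra.
Qed.

Lemma foc_real (Rw H h c g k : R) : 0 <= H - h -> 0 < h -> 0 <= g ->
  (forall x, 0 < x -> x / (H - h + x) * Rw - c * x - g / 2 * x ^+ 2 - k
       <= h / H * Rw - c * h - g / 2 * h ^+ 2 - k) ->
  Rw * (H - h) = (c + g * h) * H ^+ 2.
Proof.
move=> Sp hp gp hyp.
have Hp : 0 < H by lra.
apply/eqP; rewrite eq_le; apply/andP; split; rewrite -subr_le0.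
- apply: (@le0_small _ (`|c + g * h| * H + g / 2 * (H + 1) * H) 1) => // t tp t1.
  have xp : 0 < h + t by lra.
  have Htp : 0 < H + t by lra.
  have := hyp (h + t) xp.
  have P : 0 < (H + t) * H by rewrite mulr_gt0.
  have -> : H - h + (h + t) = H + t by ring.
  move=> ineq.
  have key : Rw * (t * (H - h)) / ((H + t) * H) <= t * (c + g * h + g * t / 2).
    have e : (h + t) / (H + t) * Rw - h / H * Rw = Rw * (t * (H - h)) / ((H + t) * H).
      by field; rewrite !gt_eqF.
    have e2 : c * (h + t) + g / 2 * (h + t) ^+ 2 - (c * h + g / 2 * h ^+ 2) = t * (c + g * h + g * t / 2) by field.
    lra.
  move: key; rewrite ler_pdivrMr // => key0.
  have key : Rw * (H - h) <= (c + g * h + g * t / 2) * ((H + t) * H).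
    by rewrite -(ler_pM2l tp); lra.
  have f1 : (c + g * h) * (t * H) <= `|c + g * h| * (t * H).
    by apply: ler_wpM2r; [rewrite mulr_ge0 // ltW | apply: ler_norm].
  have f2 : g / 2 * t * (H + t) * H <= g / 2 * t * (H + 1) * H.
    apply: ler_wpM2r; first exact: ltW.
    apply: ler_wpM2l; first by rewrite mulr_ge0 ?divr_ge0 // ltW.
    by rewrite lerD2l.
  have e3 : (c + g * h + g * t / 2) * ((H + t) * H) = (c + g * h) * H ^+ 2 + (c + g * h) * (t * H) + g / 2 * t * (H + t) * H by field.
  have e4 : t * (`|c + g * h| * H + g / 2 * (H + 1) * H) = `|c + g * h| * (t * H) + g / 2 * t * (H + 1) * H by ring.
  lra.
- apply: (@le0_small _ (`|c + g * h| * H + g / 2 * H * H) (h / 2)) => [|t tp th]; first lra.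
  have xp : 0 < h - t by lra.
  have := hyp (h - t) xp.
  have Ht : 0 < H - t by lra.
  have P : 0 < H * (H - t) by rewrite mulr_gt0.
  have -> : H - h + (h - t) = H - t by ring.
  move=> ineq.
  have key : t * (c + g * h - g * t / 2) <= Rw * (t * (H - h)) / (H * (H - t)).
    have e : h / H * Rw - (h - t) / (H - t) * Rw = Rw * (t * (H - h)) / (H * (H - t)).
      by field; rewrite !gt_eqF.
    have e2 : c * h + g / 2 * h ^+ 2 - (c * (h - t) + g / 2 * (h - t) ^+ 2) = t * (c + g * h - g * t / 2) by field.
    lra.
  move: key; rewrite ler_pdivlMr // => key0.
  have key : (c + g * h - g * t / 2) * (H * (H - t)) <= Rw * (H - h).
    by rewrite -(ler_pM2l tp); lra.
  have f1 : (c + g * h) * (t * H) <= `|c + g * h| * (t * H).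
    by apply: ler_wpM2r; [rewrite mulr_ge0 // ltW | apply: ler_norm].
  have f2 : g / 2 * t * H * (H - t) <= g / 2 * t * H * H.
    have g2 : 0 <= g / 2 by lra.
    apply: ler_wpM2l; first exact: mulr_ge0 (mulr_ge0 g2 (ltW tp)) (ltW Hp).
    lra.
  have e3 : (c + g * h - g * t / 2) * (H * (H - t)) = (c + g * h) * H ^+ 2 - (c + g * h) * (t * H) - g / 2 * t * H * (H - t) by field.
  have e4 : t * (`|c + g * h| * H + g / 2 * H * H) = `|c + g * h| * (t * H) + g / 2 * t * H * H by ring.
  lra.
Qed.

End Game.
Section NE.
Variable R : realType.

Lemma totH_ge N (h : 'I_N -> R) i : (forall j, 0 <= h j) -> h i <= totH h.
Proof. by move=> hp; rewrite /totH (bigD1 i) //= lerDl sumr_ge0. Qed.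

Lemma totH_upd N (h : 'I_N -> R) i x : totH (upd h i x) = totH h - h i + x.
Proof.
rewrite /totH (bigD1 i) //= [in RHS](bigD1 i) //= /upd eqxx.
have -> : \sum_(j < N | j != i) (if j == i then x else h j) = \sum_(j < N | j != i) h j.
  by apply: eq_bigr => j /negbTE ->.
ring.
Qed.

Lemma NE_foc N (ct : 'I_N -> R) ct0 eta Rw g K A0 beta (h : 'I_N -> R) i :
  0 <= g -> is_NE ct ct0 eta Rw g K A0 beta h -> 0 < h i ->
  Rw * (totH h - h i) = (cost ct0 (ct i) eta (beta i) + g * h i) * (totH h) ^+ 2.
Proof.
move=> gp [hge hNE] hi.
have Hp : 0 < totH h by apply: lt_le_trans hi (totH_ge i hge).
apply: (@foc_real _ Rw _ _ _ g (if ~~ A0 i && (0 < beta i) then K else 0)) => //.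
  by rewrite subr_ge0 totH_ge.
move=> x xp; have := hNE i x (ltW xp).
rewrite /payoff totH_upd.
have ui : upd h i x i = x by rewrite /upd eqxx.
have p1 : 0 < totH h - h i + x by rewrite ltr_wpDl // subr_ge0 totH_ge.
by rewrite ui p1 Hp.
Qed.

Lemma NE_sum N n (Rw g : R) (h c : 'I_N -> R) :
  (forall j : 'I_N, 0 <= h j) -> (forall j : 'I_N, (0 < h j) = (j < n)%N) ->
  (forall j : 'I_N, (j < n)%N -> Rw * (totH h - h j) = (c j + g * h j) * (totH h) ^+ 2) ->
  0 < totH h ->
  (forall j : 'I_N, (j < n)%N -> h j * (Rw + g * (totH h) ^+ 2) = totH h * (Rw - c j * totH h)) /\
  Rw + g * (totH h) ^+ 2 =
    (\sum_(j < N | (j < n)%N) 1) * Rw - (\sum_(j < N | (j < n)%N) c j) * totH h.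
Proof.
move=> hge hact hfoc Hp.
have hj : forall j : 'I_N, (j < n)%N -> h j * (Rw + g * (totH h) ^+ 2) = totH h * (Rw - c j * totH h).
  by move=> j /hfoc e; lra.
split => //.
have hz : forall j : 'I_N, ~~ (j < n)%N -> h j = 0.
  move=> j; rewrite -hact => /negP hn; apply/eqP; rewrite eq_le hge andbT.
  by rewrite leNgt; apply/negP.
have Hsum : totH h = \sum_(j < N | (j < n)%N) h j.
  rewrite /totH (bigID (fun j : 'I_N => (j < n)%N)) /=.
  rewrite [X in _ + X]big1 ?addr0 //.
have nz : totH h != 0 by rewrite gt_eqF.
apply: (mulfI nz).
rewrite [X in X * _ = _]Hsum mulr_suml (eq_bigr _ hj) -mulr_sumr sumrB.
congr (_ * (_ - _)).
  by rewrite mulr_suml; apply: eq_bigr => j _; rewrite mul1r.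
by rewrite mulr_suml.
Qed.

End NE.
Section Signs.
Variable R : realType.
Lemma signs (Rw g C0 c H0 h0 : R) : 0 < Rw -> 0 <= g -> 0 < c -> c < C0 ->
  0 < H0 -> 0 < h0 -> h0 < H0 ->
  h0 * (Rw + g * H0^+2) = H0 * (Rw - c * H0) ->
  [/\ 0 < H0^+2 / (Rw + g * H0^+2) + h0 / (C0 + 2 * g * H0) * (1 - H0^+2 / (Rw + g * H0^+2) * ((c + 2 * g * h0) / h0)),
      (h0 / (C0 + 2 * g * H0) * (1 - H0^+2 / (Rw + g * H0^+2) * ((c + 2 * g * h0) / h0)) < 0 <-> h0 / H0 < 1 / 2),
      0 < H0 / (Rw + g * H0^+2) &
      0 < (c + 2 * g * h0) / (C0 + 2 * g * H0) < 1].
Proof.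
move=> Rp gp cp cC H0p h0p hH eq0.
have Q0p : 0 < Rw + g * H0^+2 by rewrite ltr_pwDl // mulr_ge0 // sqr_ge0.
have Dp : 0 < C0 + 2 * g * H0 by rewrite ltr_wpDr // ?mulr_ge0 // ?ltW //; lra.
have nQ := lt0r_neq0 Q0p; have nD := lt0r_neq0 Dp; have nh := lt0r_neq0 h0p.
split.
- have -> : H0^+2 / (Rw + g * H0^+2) + h0 / (C0 + 2 * g * H0) * (1 - H0^+2 / (Rw + g * H0^+2) * ((c + 2 * g * h0) / h0))
     = (H0^+2 * (C0 - c) + 2 * g * H0^+2 * (H0 - h0) + h0 * (Rw + g * H0^+2)) / ((Rw + g * H0^+2) * (C0 + 2 * g * H0)).
    by field; rewrite nQ nD nh.
  apply: divr_gt0; last exact: mulr_gt0.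
  have : 0 < H0^+2 * (C0 - c) by rewrite mulr_gt0 ?exprn_gt0 // subr_gt0.
  have hd : 0 <= H0 - h0 by lra.
  have : 0 <= 2 * g * H0^+2 * (H0 - h0) by rewrite !mulr_ge0 ?sqr_ge0 // ltW.
  have : 0 < h0 * (Rw + g * H0^+2) by rewrite mulr_gt0.
  lra.
- have ce : c = (Rw * H0 - h0 * (Rw + g * H0^+2)) / H0^+2.
    by rewrite eq0; field; rewrite gt_eqF.
  have -> : h0 / (C0 + 2 * g * H0) * (1 - H0^+2 / (Rw + g * H0^+2) * ((c + 2 * g * h0) / h0))
     = (2 * h0 - H0) * (Rw / ((Rw + g * H0^+2) * (C0 + 2 * g * H0))).
    by rewrite ce; field; rewrite nQ nD nh gt_eqF.
  rewrite pmulr_llt0; last by rewrite divr_gt0 // mulr_gt0.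
  rewrite ltr_pdivrMr //; split => *; lra.
- exact: divr_gt0.
- apply/andP; split.
    by rewrite divr_gt0 // ltr_wpDr // !mulr_ge0 // ltW.
  rewrite ltr_pdivrMr // mul1r.
  have : g * h0 <= g * H0 by rewrite ler_wpM2l // ltW.
  lra.
Qed.
End Signs.
Section Mono.
Variable R : realType.
Lemma mono (g D Ib eta ci cj hi hj Ii Ij : R) : 0 <= g -> 0 < D -> 0 <= Ib ->
  2 * eta * Ib < D -> 0 < eta -> ci < cj -> hj <= hi -> Ij - Ii = (cj - ci) / (2 * eta) ->
  (1 - (ci + 2 * g * hi) / D) * Ii - (ci + 2 * g * hi) / D * (Ib - Ii)
  < (1 - (cj + 2 * g * hj) / D) * Ij - (cj + 2 * g * hj) / D * (Ib - Ij).
Proof.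
move=> gp Dp Ibp etaD etap cc hh eI.
rewrite -subr_gt0.
have -> : (1 - (cj + 2 * g * hj) / D) * Ij - (cj + 2 * g * hj) / D * (Ib - Ij) -
   ((1 - (ci + 2 * g * hi) / D) * Ii - (ci + 2 * g * hi) / D * (Ib - Ii))
   = (Ij - Ii) - (cj - ci + 2 * g * (hj - hi)) / D * Ib by ring.
rewrite eI subr_gt0.
have h1 : (cj - ci + 2 * g * (hj - hi)) / D * Ib <= (cj - ci) / D * Ib.
  apply: ler_wpM2r => //; apply: ler_wpM2r; first by rewrite invr_ge0 ltW.
  have : 0 <= g * (hi - hj) by rewrite mulr_ge0 // subr_ge0.
  lra.
apply: le_lt_trans h1 _.
have e2p : 0 < 2 * eta by rewrite mulr_gt0.
have -> : (cj - ci) / D * Ib = (cj - ci) * (Ib / D) by ring.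
have -> : (cj - ci) / (2 * eta) = (cj - ci) * (1 / (2 * eta)) by ring.
rewrite ltr_pM2l ?subr_gt0 // ltr_pdivrMr // mulrC mulrA mulr1 ltr_pdivlMr //.
lra.
Qed.
End Mono.
Section Aux.
Variable R : realType.
Lemma cost0 (ct0 x e : R) : cost ct0 x e 0 = x.
Proof. by rewrite /cost; ring. Qed.

Lemma costI N (ct : 'I_N -> R) ct0 n eta j :
  cost ct0 (ct j) eta (beta_star N n eta j) = ct j - Ired ct ct0 n eta j.
Proof. by rewrite /Ired cost0; ring. Qed.

Lemma Ired_eta N (ct : 'I_N -> R) ct0 n eta (j : 'I_N) : 1 <= eta -> (j < n)%N ->
  Ired ct ct0 n eta j = (ct j - ct0) / (2 * eta).
Proof.
move=> e1 jn.
have ep : 0 < eta by apply: lt_le_trans ltr01 e1.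
rewrite /Ired /beta_star jn min_l; last by rewrite invf_le1.
by rewrite /cost; field; rewrite gt_eqF.
Qed.
End Aux.

Unset Implicit Arguments.
Set Strict Implicit.

Theorem proposition5p3 (R : realType) (N : nat) (ct : 'I_N -> R)
  (ct0 Rw gamma K : R) (n : nat) (h0 : 'I_N -> R) (hs : R -> 'I_N -> R) :
  (2 <= N)%N ->
  (forall i, 0 < ct i) ->
  (forall i j : 'I_N, (i <= j)%N -> ct i <= ct j) ->
  0 < ct0 -> (forall i, ct0 <= ct i) ->
  0 < Rw -> 0 <= gamma -> 0 < K ->
  (* h0 = hstar(0), with A(0) = {1,...,n} *)
  is_NE ct ct0 0 Rw gamma K (fun j : 'I_N => (j < n)%N) (fun _ => 0) h0 ->
  (forall i : 'I_N, (0 < h0 i) = (i < n)%N) ->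
  (* for eta large, hs eta = hstar(beta_star) and A(beta_star) = A(0) *)
  (exists eta1 : R, forall eta, eta1 <= eta -> 0 < eta ->
     is_NE ct ct0 eta Rw gamma K (fun j : 'I_N => (j < n)%N)
       (beta_star N n eta) (hs eta) /\
     (forall i : 'I_N, (0 < hs eta i) = (i < n)%N)) ->
  forall i : 'I_N, (i < n)%N ->
  (exists C eta0 : R, forall eta, eta0 <= eta ->
     `| hs eta i - h0 i - a_plus ct Rw gamma n h0 i * Ired ct ct0 n eta i
        - a_minus ct Rw gamma n h0 i * (Ibar ct ct0 n eta - Ired ct ct0 n eta i) |
     <= C * (Ibar ct ct0 n eta) ^+ 2) /\
  0 < a_plus ct Rw gamma n h0 i /\
  (a_minus ct Rw gamma n h0 i < 0 <-> h0 i / totH h0 < 1 / 2) /\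
  (exists C eta0 : R, forall eta, eta0 <= eta ->
     `| hs eta i / totH (hs eta) - h0 i / totH h0
        - alpha0 Rw gamma h0 * Qshift ct ct0 gamma n h0 eta i |
     <= C * (Ibar ct ct0 n eta) ^+ 2) /\
  0 < alpha0 Rw gamma h0 /\
  0 < alpha_i ct gamma n h0 i < 1 /\
  (forall j : 'I_N, (j < n)%N -> ct i < ct j ->
     forall eta, 1 < eta ->
       Qshift ct ct0 gamma n h0 eta i < Qshift ct ct0 gamma n h0 eta j).
Proof.
move=> N2 ctp ctm ct0p ct0le Rp gp Kp NE0 act0 [eta1 HS] i ilt.
have h0ge : forall j, 0 <= h0 j by case: NE0.
have h0ip : 0 < h0 i by rewrite act0.
have H0p : 0 < totH h0 by apply: lt_le_trans h0ip (totH_ge i h0ge).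
have foc0 : forall j : 'I_N, (j < n)%N ->
    Rw * (totH h0 - h0 j) = (ct j + gamma * h0 j) * (totH h0) ^+ 2.
  move=> j jn; have hp : 0 < h0 j by rewrite act0.
  by have := NE_foc gp NE0 hp; rewrite cost0.
have [ind0 sum0] := NE_sum h0ge act0 foc0 H0p.
have Sp : 0 < totH h0 - h0 i.
  have := foc0 i ilt.
  have : 0 < (ct i + gamma * h0 i) * totH h0 ^+ 2.
    by rewrite mulr_gt0 ?exprn_gt0 // ltr_pwDl // mulr_ge0 // ltW.
  move=> p e; rewrite -e in p; by rewrite pmulr_rgt0 in p.
have [j jne jp] : exists2 j, j != i & 0 < h0 j.
  case: (pickP (fun j => (j != i) && (0 < h0 j))) => [j /andP [jne jp]| none].
    by exists j.
  exfalso; move: Sp.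
  rewrite /totH (bigD1 i) //= addrC addrK big1 ?ltxx // => j jne.
  have := none j; rewrite jne /= => /negbT hn.
  apply/eqP; rewrite eq_le h0ge andbT leNgt; exact: hn.
have jn : (j < n)%N by rewrite -act0.
have c_lt : ct i < csum ct n.
  rewrite /csum (bigD1 i) //= (bigD1 j) /=; last by rewrite jn jne.
  have : 0 <= \sum_(k < N | ((k < n)%N && (k != i)) && (k != j)) ct k.
    by apply: sumr_ge0 => k _; apply: ltW.
  have := ctp j; lra.
have hlt : h0 i < totH h0 by lra.
have C0p : 0 < csum ct n by apply: lt_trans c_lt.
have [sp1 sp2 sp3 sp4] := signs Rp gp (ctp i) c_lt H0p h0ip hlt (ind0 i ilt).
have [K1 HK1] := core_h Rp gp C0p H0p h0ip (ind0 i ilt).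
have [K2 HK2] := core_s Rp gp C0p H0p h0ip (ind0 i ilt).
have Ibge : forall eta, 1 <= eta -> 0 <= Ibar ct ct0 n eta.
  move=> eta e1; apply: sumr_ge0 => k kn; rewrite Ired_eta //.
  apply: divr_ge0; first by rewrite subr_ge0.
  by rewrite mulr_ge0 //; apply: le_trans e1.
have key : forall eta, Num.max eta1 1 <= eta ->
   [/\ 0 < totH (hs eta), 0 <= Ired ct ct0 n eta i,
       Ired ct ct0 n eta i <= Ibar ct ct0 n eta, Ibar ct ct0 n eta <= csum ct n / 2 &
       (totH (hs eta) - totH h0) * (gamma * (totH (hs eta) + totH h0) + csum ct n)
          = Ibar ct ct0 n eta * totH (hs eta) /\
       hs eta i * (Rw + gamma * totH (hs eta) ^+ 2)
          = totH (hs eta) * (Rw - (ct i - Ired ct ct0 n eta i) * totH (hs eta))].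
  move=> eta; rewrite ge_max => /andP [e1 e2].
  have etap : 0 < eta by apply: lt_le_trans ltr01 e2.
  have [NE1 act1] := HS eta e1 etap.
  have hsge : forall j, 0 <= hs eta j by case: NE1.
  have hsip : 0 < hs eta i by rewrite act1.
  have H1p : 0 < totH (hs eta) by apply: lt_le_trans hsip (totH_ge i hsge).
  have foc1 : forall j : 'I_N, (j < n)%N ->
     Rw * (totH (hs eta) - hs eta j) = (ct j - Ired ct ct0 n eta j + gamma * hs eta j) * (totH (hs eta)) ^+ 2.
    move=> k kn; have hp : 0 < hs eta k by rewrite act1.
    by have := NE_foc gp NE1 hp; rewrite costI.
  have [ind1 sum1] := NE_sum hsge act1 foc1 H1p.
  have Ip : forall k : 'I_N, (k < n)%N -> 0 <= Ired ct ct0 n eta k.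
    move=> k kn; rewrite Ired_eta //.
    apply: divr_ge0; first by rewrite subr_ge0.
    by rewrite mulr_ge0 // ltW.
  split => //.
  - exact: Ip.
  - rewrite /Ibar (bigD1 i) //= lerDl sumr_ge0 // => k /andP [kn _].
    exact: Ip.
  - rewrite /Ibar /csum mulr_suml ler_sum // => k kn.
    rewrite Ired_eta // ler_pdivrMr ?mulr_gt0 //.
    have := ctp k; have := ct0le k.
    have : ct k <= ct k * eta by rewrite ler_peMr // ltW.
    lra.
  split.
    move: sum1 sum0; rewrite sumrB /Ibar /csum => s1 s0.
    lra.
  exact: ind1.
split.
  exists K1, (Num.max eta1 1) => eta he.
  have [H1p Ip IIb IbC [rel ind]] := key eta he.
  exact: (HK1 _ _ _ _ H1p Ip IIb IbC rel ind).
split; first exact: sp1.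
split; first exact: sp2.
split.
  exists K2, (Num.max eta1 1) => eta he.
  have [H1p Ip IIb IbC [rel ind]] := key eta he.
  exact: (HK2 _ _ _ _ H1p Ip IIb IbC rel ind).
split; first exact: sp3.
split; first exact: sp4.
move=> k kn ck eta e1.
have e1' : 1 <= eta by apply: ltW.
have etap : 0 < eta by apply: lt_trans ltr01 e1.
rewrite /Qshift /alpha_i.
apply: (@mono R gamma _ _ eta) => //.
- by rewrite ltr_wpDr // !mulr_ge0 // ltW.
- exact: Ibge.
- have e : 2 * eta * Ibar ct ct0 n eta = \sum_(l < N | (l < n)%N) (ct l - ct0).
    rewrite /Ibar mulr_sumr; apply: eq_bigr => l ln; rewrite Ired_eta //.
    by field; rewrite gt_eqF.
  rewrite e sumrB.
  have : ct0 <= \sum_(l < N | (l < n)%N) ct0.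
    by rewrite (bigD1 i) //= lerDl sumr_ge0 // => l _; apply: ltW.
  have : 0 <= 2 * gamma * totH h0 by rewrite !mulr_ge0 // ltW.
  rewrite /csum; lra.
- have := ind0 i ilt; have := ind0 k kn => ek ei.
  have e : (h0 k - h0 i) * (Rw + gamma * totH h0 ^+ 2) = - ((ct k - ct i) * totH h0 ^+ 2) by lra.
  have : (h0 k - h0 i) * (Rw + gamma * totH h0 ^+ 2) <= 0.
    by rewrite e oppr_le0 mulr_ge0 ?sqr_ge0 // subr_ge0 ltW.
  rewrite pmulr_lle0; first by rewrite subr_le0.
  by rewrite ltr_pwDl // mulr_ge0 // sqr_ge0.
- by rewrite !Ired_eta //; field; rewrite gt_eqF.
Qed.
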